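(* Let $\delta$ range over $\mathcal D_e^-$ and let $\alpha$ be a smooth map on (an open subset of) $\mathcal D_e^-$ with values in the exact degree-1 differentials, such that $[\delta,\alpha]=\delta\alpha+\alpha\delta=1$. Then, in $\Lambda(T^*\mathcal D_e^-)\widehat\otimes\mathrm{End}(E)$, $$\mathbf d(\alpha\,\mathbf d\delta)=\big[\delta,(\mathbf d\alpha)\,\alpha\,\mathbf d\delta\big]+(\alpha\,\mathbf d\delta)^2 .$$
   Context: $E=\bigoplus_{i=p}^qE^i$ is a finite-dimensional complex $\mathbb Z$-graded vector space. $\mathrm{End}(E)$ is $\mathbb Z$-graded ($\mathrm{End}^k$ raises degree by $k$) and $\mathbb Z_2$-graded by the parity of the degree. $[A,B]=AB-(-1)^{\deg A\deg B}BA$ is the supercommutator. A differential of degree $\pm1$ is an element of $\mathrm{End}^{\pm1}(E)$ with square $0$; it is exact if its cohomology vanishes. $\mathcal D_e^-$ denotes the set of exact differentials of degree $-1$, a smooth manifold (an orbit of the group of degree-preserving automorphisms acting by conjugation), assumed nonempty. $\mathbf d$ is the de Rham operator on $\mathcal D_e^-$, and $\delta$ is viewed as the tautological $\mathrm{End}^{-1}(E)$-valued function, so $\mathbf d\delta$ is an $\mathrm{End}^{-1}(E)$-valued 1-form. Products are taken in the $\mathbb Z_2$-graded tensor product $\Lambda(T^*\mathcal D_e^-)\widehat\otimes\mathrm{End}(E)$, where 1-forms are odd. *)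

(* Defs.v *)
From HB Require Import structures.
From mathcomp Require Import all_boot all_order all_algebra.
From mathcomp Require Import all_classical all_reals.
From mathcomp Require Import topology normedtype derive.
From mathcomp Require Import complex.
Set Implicit Arguments. Unset Strict Implicit. Unset Printing Implicit Defensive.
Import Order.TTheory GRing.Theory Num.Theory.
Import numFieldNormedType.Exports.
Local Open Scope ring_scope.
Local Open Scope classical_set_scope.

(* E = C^n with a homogeneous basis: basis vector j has degree [deg j].
   Endomorphisms of E are matrices 'M[R[i]]_n acting on column vectors,
   (A *m v) i = \sum_j A i j * v j. *)

Section Graded.
Variable R : realType.
Local Notation C := (R[i])%C.
Variable n : nat.
Variable deg : 'I_n -> int.
Local Notation M := ('M[C]_n).

(* A is in End^k(E): it raises degree by k *)
Definition homog (k : int) (A : M) : Prop :=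
  forall i j, A i j != 0 -> deg i = (deg j + k)%R.

Definition differential (k : int) (A : M) : Prop := homog k A /\ A *m A = 0.

Definition exact_mx (A : M) : Prop :=
  forall v : 'cV[C]_n, A *m v = 0 -> exists w : 'cV[C]_n, v = A *m w.

Definition De_minus : set M := [set A | differential (-1) A /\ exact_mx A].
Definition De_plus : set M := [set A | differential 1 A /\ exact_mx A].

(* Z_2-grading of End(E): even and odd parts, and the parity twist
   A |-> (-1)^{|A|} A extended linearly. *)
Definition evenpart (A : M) : M :=
  \matrix_(i, j) (if odd `|(deg i - deg j)%R|%N then 0 else A i j).
Definition oddpart (A : M) : M :=
  \matrix_(i, j) (if odd `|(deg i - deg j)%R|%N then A i j else 0).
Definition twist (A : M) : M := evenpart A - oddpart A.

(* supercommutator [A,B] = AB - (-1)^{|A||B|} BA, extended bilinearly *)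
Definition scomm (A B : M) : M :=
  A *m B - (evenpart B *m A + oddpart B *m evenpart A - oddpart B *m oddpart A).

(* Values at a point of End(E)-valued forms of degree 0,1,2, evaluated on
   tangent vectors (tangent vectors of D_e^- are elements of End^{-1}(E)). *)
Definition form0 := M.
Definition form1 := M -> M.
Definition form2 := M -> M -> M.

(* Products in Lambda(T^* D) (x)^ End(E), with
   (phi (x) A)(psi (x) B) = (-1)^{|A| deg psi} (phi /\ psi) (x) AB  and
   (phi /\ psi)(u,v) = phi(u) psi(v) - phi(v) psi(u). *)
Definition mul01 (A : form0) (w : form1) : form1 := fun u => twist A *m w u.
Definition mul10 (w : form1) (A : form0) : form1 := fun u => w u *m A.
Definition mul11 (w e : form1) : form2 :=
  fun u v => twist (w u) *m e v - twist (w v) *m e u.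
Definition add2 (X Y : form2) : form2 := fun u v => X u v + Y u v.
(* supercommutator of a 0-form with a 2-form (total parity; 2-forms are even) *)
Definition scomm02 (A : form0) (X : form2) : form2 := fun u v => scomm A (X u v).

(* the End^{-1}(E)-valued 1-form d(delta), delta the tautological function *)
Definition ddelta : form1 := fun u => u.

Definition has_mderiv (g : R -> M) (t0 : R) (D : M) : Prop :=
  forall i j,
    is_derive t0 (1 : R) (fun t => complex.Re (g t i j)) (complex.Re (D i j)) /\
    is_derive t0 (1 : R) (fun t => complex.Im (g t i j)) (complex.Im (D i j)).

Definition curve_through (U : set M) (x u : M) (g : R -> M) : Prop :=
  (forall t, U (g t)) /\ g 0 = x /\ has_mderiv g 0 u.

Definition tangent (U : set M) (x u : M) : Prop := exists g, curve_through U x u g.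

Definition rel_open (U : set M) : Prop :=
  U `<=` De_minus /\
  forall x, U x -> exists eps : R, 0 < eps /\
    forall y, De_minus y -> (forall i j, `|y i j - x i j| < (eps%:C)%C) -> U y.

Definition is_differential (U : set M) (alpha : M -> M) (Dalpha : M -> M -> M) : Prop :=
  forall x u g, U x -> curve_through U x u g -> has_mderiv (alpha \o g) 0 (Dalpha x u).

Definition is_form_deriv (U : set M) (w : M -> form1) (Dw : M -> M -> M -> M) : Prop :=
  forall x u g, U x -> curve_through U x u g ->
    forall v, has_mderiv (fun t => w (g t) v) 0 (Dw x u v).

Definition dform1 (Dw : M -> M -> M -> M) (x : M) : form2 :=
  fun u v => Dw x u v - Dw x v u.

End Graded.

(* Main.v *)
Require Import Defs.
From HB Require Import structures.
From mathcomp Require Import all_boot all_order all_algebra.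
From mathcomp Require Import all_classical all_reals.
From mathcomp Require Import topology normedtype derive.
From mathcomp Require Import complex.
From mathcomp Require Import ring.
Import Order.TTheory GRing.Theory Num.Theory.
Import numFieldNormedType.Exports.
Local Open Scope ring_scope.
Set Implicit Arguments. Unset Strict Implicit.

Section A.
Variable R : realType.
Local Notation C := (R[i])%C.
Definition cder (f : R -> C) (t0 : R) (d : C) :=
  is_derive t0 (1:R) (fun t => complex.Re (f t)) (complex.Re d) /\
  is_derive t0 (1:R) (fun t => complex.Im (f t)) (complex.Im d).

Lemma isd_ext (f g : R -> R) t0 d d' : (forall t, f t = g t) -> d = d' ->
  is_derive t0 (1:R) f d -> is_derive t0 (1:R) g d'.
Proof. by move=> e <-; have -> : g = f by apply: funext=> t; rewrite e. Qed.

Lemma cder_uniq f t0 d1 d2 : cder f t0 d1 -> cder f t0 d2 -> d1 = d2.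
Proof.
case=> [h1 h2] [h3 h4].
have e1 := @derive_val _ _ _ _ _ _ _ h1.
have e2 := @derive_val _ _ _ _ _ _ _ h2.
have e3 := @derive_val _ _ _ _ _ _ _ h3.
have e4 := @derive_val _ _ _ _ _ _ _ h4.
move: e1 e2 e3 e4; clear h1 h2 h3 h4; case: d1 => a b; case: d2 => c d /= -> -> -> -> //.
Qed.

Lemma cder_cst c t0 : cder (fun _ => c) t0 0.
Proof. split; exact: is_derive_cst. Qed.

Lemma cder_ext f g t0 d : (forall t, f t = g t) -> cder f t0 d -> cder g t0 d.
Proof. by move=> e; have -> : g = f by apply: funext=> t; rewrite e. Qed.

Lemma cder_add f g t0 a b : cder f t0 a -> cder g t0 b -> cder (fun t => f t + g t) t0 (a + b).
Proof.
case=> h1 h2 [h3 h4]; split.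
- eapply isd_ext; last exact: (is_deriveD h1 h3); [move=> t /=|].
    change (complex.Re (f t) + complex.Re (g t) = complex.Re (f t + g t)).
    case: (f t) => ? ?; case: (g t) => ? ? /=; reflexivity.
  case: a {h1 h2} => ? ?; case: b {h3 h4} => ? ? /=; reflexivity.
- eapply isd_ext; last exact: (is_deriveD h2 h4); [move=> t /=|].
    change (complex.Im (f t) + complex.Im (g t) = complex.Im (f t + g t)).
    case: (f t) => ? ?; case: (g t) => ? ? /=; reflexivity.
  case: a {h1 h2} => ? ?; case: b {h3 h4} => ? ? /=; reflexivity.
Qed.

Lemma cder_mul f g t0 a b : cder f t0 a -> cder g t0 b ->
  cder (fun t => f t * g t) t0 (f t0 * b + a * g t0).
Proof.
case=> h1 h2 [h3 h4].
have m1 := is_deriveM h1 h3. have m2 := is_deriveM h2 h4.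
have m3 := is_deriveM h1 h4. have m4 := is_deriveM h2 h3.
split.
- eapply isd_ext; last exact: (is_deriveB m1 m2); [move=> t /=|].
    change (complex.Re (f t) * complex.Re (g t) - complex.Im (f t) * complex.Im (g t) = complex.Re (f t * g t)).
    case: (f t) => ? ?; case: (g t) => ? ? /=; reflexivity.
  case: a {h1 h2 m1 m2 m3 m4} => ? ?; case: b {h3 h4} => ? ? /=.
  case: (f t0) => ? ?; case: (g t0) => ? ? /=.
  rewrite /GRing.scale /=; ring.
- eapply isd_ext; last exact: (is_deriveD m3 m4); [move=> t /=|].
    change (complex.Re (f t) * complex.Im (g t) + complex.Im (f t) * complex.Re (g t) = complex.Im (f t * g t)).
    case: (f t) => ? ?; case: (g t) => ? ? /=; reflexivity.
  case: a {h1 h2 m1 m2 m3 m4} => ? ?; case: b {h3 h4} => ? ? /=.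
  case: (f t0) => ? ?; case: (g t0) => ? ? /=.
  rewrite /GRing.scale /=; ring.
Qed.

Lemma cder_sum n (h : 'I_n -> R -> C) t0 dh :
  (forall k, cder (h k) t0 (dh k)) -> cder (fun t => \sum_k h k t) t0 (\sum_k dh k).
Proof.
elim: n h dh => [|n IH] h dh H.
  rewrite big_ord0; apply: cder_ext (cder_cst 0 t0) => t; by rewrite big_ord0.
rewrite big_ord_recr; apply: cder_ext; last first.
  apply: cder_add; last exact: H.
  exact: (IH (fun k => h (widen_ord (leqnSn n) k)) (fun k => dh (widen_ord (leqnSn n) k))).
by move=> t /=; rewrite big_ord_recr.
Qed.

Variable n : nat.
Local Notation M := ('M[C]_n).

Lemma mderP (g : R -> M) t0 D : @has_mderiv R n g t0 D <-> forall i j, cder (fun t => g t i j) t0 (D i j).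
Proof. by []. Qed.

Lemma mder_uniq (g : R -> M) t0 D1 D2 : has_mderiv g t0 D1 -> has_mderiv g t0 D2 -> D1 = D2.
Proof.
move=> /mderP h1 /mderP h2; apply/matrixP => i j; exact: cder_uniq (h1 i j) (h2 i j).
Qed.

Lemma mder_cst (A : M) t0 : has_mderiv (fun _ => A) t0 0.
Proof. apply/mderP => i j; rewrite mxE; exact: cder_cst. Qed.

Lemma mder_ext (g h : R -> M) t0 D : (forall t, g t = h t) -> has_mderiv g t0 D -> has_mderiv h t0 D.
Proof. by move=> e; have -> : h = g by apply: funext=> t; rewrite e. Qed.

Lemma mder_add (g h : R -> M) t0 A B : has_mderiv g t0 A -> has_mderiv h t0 B ->
  has_mderiv (fun t => g t + h t) t0 (A + B).
Proof.
move=> /mderP h1 /mderP h2; apply/mderP => i j; rewrite mxE.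
apply: (cder_ext _ (cder_add (h1 i j) (h2 i j))) => t; by rewrite mxE.
Qed.

Lemma mder_mul (g h : R -> M) t0 A B : has_mderiv g t0 A -> has_mderiv h t0 B ->
  has_mderiv (fun t => g t *m h t) t0 (g t0 *m B + A *m h t0).
Proof.
move=> /mderP h1 /mderP h2; apply/mderP => i j; rewrite !mxE -big_split /=.
apply: cder_ext; last first.
  apply: cder_sum => k; exact: cder_mul (h1 i k) (h2 k j).
by move=> t; rewrite mxE.
Qed.

Lemma mder_homog (deg : 'I_n -> int) k (g : R -> M) t0 D :
  (forall t, @homog R n deg k (g t)) -> has_mderiv g t0 D -> @homog R n deg k D.
Proof.
move=> hg /mderP hD i j; apply: contraNeq => ne.
have z : forall t, g t i j = 0.
  move=> t; apply/eqP; apply: contraNT ne => /hg ->; exact/eqP.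
have := cder_uniq (hD i j) (cder_ext (fun t => esym (z t)) (cder_cst 0 t0)).
by move=> ->.
Qed.
End A.

Section B.
Variable R : realType.
Local Notation C := (R[i])%C.
Variable n : nat.
Variable deg : 'I_n -> int.
Local Notation M := ('M[C]_n).
Local Notation hom := (@homog R n deg).

Lemma homog_mul k l (A B : M) : hom k A -> hom l B -> hom (k + l) (A *m B).
Proof.
move=> hA hB i j; rewrite mxE; apply: contraNeq => ne.
rewrite big1 // => m _.
have [z|nz] := eqVneq (A i m) 0; first by rewrite z mul0r.
have [z|nz2] := eqVneq (B m j) 0; first by rewrite z mulr0.
by case/eqP: ne; rewrite (hA _ _ nz) (hB _ _ nz2) -addrA (addrC l).
Qed.

Lemma homog_add k (A B : M) : hom k A -> hom k B -> hom k (A + B).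
Proof.
move=> hA hB i j; rewrite mxE; apply: contraNeq => ne.
have [z|nz] := eqVneq (A i j) 0; last by case/eqP: ne; rewrite (hA _ _ nz).
have [z2|nz2] := eqVneq (B i j) 0; last by case/eqP: ne; rewrite (hB _ _ nz2).
by rewrite z z2 addr0.
Qed.

Lemma homog_opp k (A : M) : hom k A -> hom k (- A).
Proof. move=> hA i j; rewrite mxE oppr_eq0; exact: hA. Qed.

Lemma homog_parts k (A : M) : hom k A ->
  evenpart deg A = (if odd `|k|%N then 0 else A) /\
  oddpart deg A = (if odd `|k|%N then A else 0).
Proof.
move=> hA; split; apply/matrixP => i j; rewrite !mxE;
have [z|nz] := eqVneq (A i j) 0.
- by rewrite z; case: ifP; case: ifP => //; rewrite mxE.
- rewrite (hA _ _ nz) addrAC subrr add0r.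
  by case: ifP; rewrite ?mxE.
- by rewrite z; case: ifP; case: ifP => //; rewrite mxE.
- rewrite (hA _ _ nz) addrAC subrr add0r.
  by case: ifP; rewrite ?mxE.
Qed.

Lemma twist_hom k (A : M) : hom k A -> twist deg A = (if odd `|k|%N then - A else A).
Proof.
move=> hA; have [e o] := homog_parts hA; rewrite /twist e o.
by case: ifP => _; rewrite ?sub0r ?subr0.
Qed.

Lemma scomm_odd ka kb (A B : M) : hom ka A -> hom kb B -> odd `|ka|%N -> odd `|kb|%N ->
  scomm deg A B = A *m B + B *m A.
Proof.
move=> hA hB oa ob; have [ea oA] := homog_parts hA; have [eb oB] := homog_parts hB.
rewrite /scomm ea oA eb oB oa ob mul0mx mulmx0 add0r sub0r opprK //.
Qed.

Lemma zm2 (V : zmodType) (p q r s : V) : p - q + (r - s) = (p + r) - (q + s).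
Proof. by rewrite addrACA opprD. Qed.
Lemma zm4 (V : zmodType) (p q r s : V) : p - q - (r - s) = p - r - (q - s).
Proof. by rewrite !opprB addrACA [RHS]addrACA (addrC (- r)). Qed.
Lemma zm3 (V : zmodType) (a b X Y : V) : -a - -b = (-a - X) - (-b - Y) + (X - Y).
Proof. by rewrite zm4 subrK. Qed.

Lemma zm (V : zmodType) (a b c : V) : - 0 - a - b - (c - a) = - c - b.
Proof. by rewrite oppr0 sub0r opprB -addrA addrCA addKr addrC. Qed.

Lemma zsolve (V : zmodType) (a b c d : V) : a + b + c + d = 0 -> b = - a - c - d.
Proof.
move=> h; apply/eqP; rewrite -subr_eq0 !opprD !opprK; apply/eqP.
by rewrite -h !addrA (addrC b a).
Qed.

Lemma key (x A P u v : M) : x *m A + A *m x = 1%:M -> A *m A = 0 ->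
  v *m x + x *m v = 0 -> u *m A + x *m P + P *m x + A *m u = 0 ->
  x *m (P *m A *m v) + P *m A *m v *m x = - (P *m v) - A *m u *m (A *m v).
Proof.
move=> h1 h2 h3 h4.
have e1 : v *m x = - (x *m v) by apply/eqP; rewrite -addr_eq0 h3.
have e3 : A *m x = 1%:M - x *m A by rewrite -h1 [x *m A + _]addrC addrK.
have e2 : x *m P = - (u *m A) - P *m x - A *m u by exact: zsolve.
rewrite -!mulmxA e1 mulmxN (mulmxA A x v) e3 mulmxBl mul1mx mulmxN mulmxBr.
rewrite (mulmxA x P) e2 !mulmxDl !mulNmx -!mulmxA (mulmxA A A v) h2 mul0mx mulmx0.
exact: zm.
Qed.
End B.

Theorem mainTheorem11 (R : realType) (n : nat) (deg : 'I_n -> int)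
  (U : set 'M[R[i]%C]_n) (alpha : 'M[R[i]%C]_n -> 'M[R[i]%C]_n)
  (Dalpha : 'M[R[i]%C]_n -> 'M[R[i]%C]_n -> 'M[R[i]%C]_n)
  (Domega : 'M[R[i]%C]_n -> 'M[R[i]%C]_n -> 'M[R[i]%C]_n -> 'M[R[i]%C]_n) :
  rel_open deg U ->
  (forall x, U x -> De_plus deg (alpha x)) ->
  (forall x, U x -> x *m alpha x + alpha x *m x = 1%:M) ->
  is_differential U alpha Dalpha ->
  is_form_deriv U (fun y => mul01 deg (alpha y) (@ddelta R n)) Domega ->
  forall x u v, U x -> tangent U x u -> tangent U x v ->
    dform1 Domega x u v =
    add2 (scomm02 deg x (mul11 deg (mul10 (Dalpha x) (alpha x)) (@ddelta R n)))
         (mul11 deg (mul01 deg (alpha x) (@ddelta R n))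
                    (mul01 deg (alpha x) (@ddelta R n))) u v.
Proof.
move=> [hUD _] hplus hxa hDa hDo x u v Ux [gu Cu] [gv Cv].
have [[hx xx] _] := hUD x Ux.
have [[ha aa] _] := hplus x Ux.
have twa : forall y, U y -> twist deg (alpha y) = - alpha y.
  move=> y Uy; have [[hy _] _] := hplus y Uy.
  by have [e o] := homog_parts hy; rewrite /twist e o /= sub0r.
have T : forall w g, curve_through U x w g ->
   [/\ homog deg (-1) w, w *m x + x *m w = 0, homog deg 1 (Dalpha x w),
       w *m alpha x + x *m Dalpha x w + Dalpha x w *m x + alpha x *m w = 0 &
       forall v, Domega x w v = - (Dalpha x w *m v)].
  move=> w g C; have C' := C; case: C' => [gU [g0 gd]].
  have hd := hDa x w g Ux C.
  split.
  - apply: (mder_homog _ gd) => t; by have [[? _] _] := hUD _ (gU t).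
  - have m := mder_mul gd gd.
    have m2 : has_mderiv (fun t => g t *m g t) 0 0.
      apply: (mder_ext _ (mder_cst 0 0)) => t.
      by have [[_ ->] _] := hUD _ (gU t).
    by have := mder_uniq m m2; rewrite g0 addrC.
  - apply: (mder_homog _ hd) => t; by have [[? _] _] := hplus _ (gU t).
  - have m := mder_add (mder_mul gd hd) (mder_mul hd gd).
    have m2 : has_mderiv (fun t => g t *m (alpha \o g) t + (alpha \o g) t *m g t) 0 0.
      apply: (mder_ext _ (mder_cst 1%:M 0)) => t /=.
      by rewrite hxa.
    have := mder_uniq m m2; rewrite /= g0 => <-.
    by rewrite (addrC (alpha x *m w)) !addrA (addrC (x *m Dalpha x w)).
  - move=> v0.
    have m := hDo x w g Ux C v0.
    have m2 := mder_mul hd (mder_cst (- v0) 0).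
    have := mder_uniq m (mder_ext _ m2).
    rewrite mulmx0 add0r mulmxN; apply => t /=.
    by rewrite /mul01 /ddelta twa // mulNmx mulmxN.
have [hu hux hPu ku Ou] := T u gu Cu.
have [hv hvx hPv kv Ov] := T v gv Cv.
rewrite /dform1 /add2 /scomm02 /mul11 /mul10 /mul01 /ddelta Ou Ov twa //.
rewrite (twist_hom (homog_mul hPu ha)) (twist_hom (homog_mul hPv ha)) /=.
rewrite (twist_hom (homog_mul (homog_opp ha) hu)) (twist_hom (homog_mul (homog_opp ha) hv)) /=.
rewrite (scomm_odd hx (homog_add (homog_mul (homog_mul hPu ha) hv) (homog_opp (homog_mul (homog_mul hPv ha) hu)))) //.
rewrite mulmxBr mulmxBl zm2 (key (hxa x Ux) aa hvx ku) (key (hxa x Ux) aa hux kv).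
rewrite !mulNmx !mulmxN !opprK.
by rewrite -zm3 opprK.
Qed.
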